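(* For $\alpha,\beta\in\mathbb{K}^\times$ with $\alpha\beta\neq1$ let $A_{5,\alpha,\beta}$ be the evolution algebra over the field $\mathbb{K}$ with natural basis $\{e_1,e_2\}$ such that $e_1^2=e_1+\beta e_2$ and $e_2^2=\alpha e_1+e_2$. For such pairs $(\alpha,\beta)$ and $(\alpha',\beta')$, $A_{5,\alpha,\beta}$ is isomorphic to $A_{5,\alpha',\beta'}$ as a $\mathbb{K}$-algebra if and only if $(\alpha,\beta)=(\alpha',\beta')$ or $(\alpha,\beta)=(\beta',\alpha')$.
   Context: An evolution algebra over $\mathbb{K}$ is a $\mathbb{K}$-algebra with a basis $\{e_i\}$ (natural basis) such that $e_ie_j=0$ for $i\neq j$. *)

(* Defs.v *)
From mathcomp Require Import all_boot all_order all_algebra.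
Set Implicit Arguments. Unset Strict Implicit. Unset Printing Implicit Defensive.
Import GRing.Theory.
Local Open Scope ring_scope.

(* Elements of the 2-dimensional algebra A_{5,alpha,beta} are written in the
   natural basis {e1, e2}: the pair (x1, x2) stands for x1 e1 + x2 e2. *)
Definition vec2 (K : fieldType) := (K * K)%type.

(* Multiplication of the evolution algebra with e1 e2 = e2 e1 = 0,
   e1^2 = e1 + beta e2, e2^2 = alpha e1 + e2, extended bilinearly:
   (x1 e1 + x2 e2)(y1 e1 + y2 e2) = x1 y1 e1^2 + x2 y2 e2^2. *)
Definition A5_mul (K : fieldType) (alpha beta : K) (x y : vec2 K) : vec2 K :=
  (x.1 * y.1 + alpha * (x.2 * y.2), beta * (x.1 * y.1) + x.2 * y.2).

Definition v2add (K : fieldType) (x y : vec2 K) : vec2 K := (x.1 + y.1, x.2 + y.2).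
Definition v2scale (K : fieldType) (a : K) (x : vec2 K) : vec2 K := (a * x.1, a * x.2).

Definition v2linear (K : fieldType) (f : vec2 K -> vec2 K) : Prop :=
  forall (a : K) (x y : vec2 K), f (v2add (v2scale a x) y) = v2add (v2scale a (f x)) (f y).

Definition A5_isomorphic (K : fieldType) (a b a' b' : K) : Prop :=
  exists f : vec2 K -> vec2 K,
    [/\ v2linear f, bijective f &
        forall x y : vec2 K, f (A5_mul a b x y) = A5_mul a' b' (f x) (f y)].

(* Main.v *)
Require Import Defs.
From mathcomp Require Import all_boot all_order all_algebra.
From mathcomp Require Import ring.
Local Open Scope ring_scope.
Import GRing.Theory.

Lemma solve2 (K : fieldType) (a b p q : K) : a * b != 1 ->
  p + a * q = 0 -> b * p + q = 0 -> p = 0 /\ q = 0.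
Proof.
move=> hab h1 h2.
have hq : q = - (b * p) by apply/eqP; rewrite -subr_eq0 opprK addrC h2.
move: h1; rewrite hq mulrN mulrA => h1.
have : p * (1 - a * b) = 0 by rewrite -h1; ring.
move/eqP; rewrite mulf_eq0 subr_eq0 [1 == _]eq_sym (negbTE hab) orbF => /eqP hp.
by split; [|rewrite hp mulr0 oppr0].
Qed.

Lemma idem (K : fieldType) (x : K) : x != 0 -> x = x * x -> x = 1.
Proof.
move=> hx h; apply: (mulfI hx); by rewrite mulr1 -h.
Qed.

Theorem lemma3p6 (K : fieldType) (alpha beta alpha' beta' : K) :
  alpha != 0 -> beta != 0 -> alpha * beta != 1 ->
  alpha' != 0 -> beta' != 0 -> alpha' * beta' != 1 ->
  (A5_isomorphic alpha beta alpha' beta' <->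
   ((alpha, beta) = (alpha', beta') \/ (alpha, beta) = (beta', alpha'))).
Proof.
move=> ha hb hab ha' hb' hab'; split.
- case=> f [lin bij hm].
  have inj := bij_inj bij.
  have f0 : f (0,0) = (0,0).
    have := lin 1 (0,0) (0,0).
    rewrite /v2add /v2scale /= !mulr0 !addr0.
    case: (f (0,0)) => p q /= [hp hq].
    rewrite mul1r in hp; rewrite mul1r in hq.
    have e1 : p = 0 by apply: (@addrI _ p); rewrite addr0 -hp.
    have e2 : q = 0 by apply: (@addrI _ q); rewrite addr0 -hq.
    by rewrite e1 e2.
  have h12 := hm (1,0) (0,1).
  have h11 := hm (1,0) (1,0).
  have h22 := hm (0,1) (0,1).
  have l1 := lin beta (0,1) (1,0).
  have l2 := lin alpha (1,0) (0,1).
  have nu : f (1,0) != (0,0).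
    by apply/eqP; rewrite -f0 => /inj [] /eqP; rewrite oner_eq0.
  have nv : f (0,1) != (0,0).
    by apply/eqP; rewrite -f0 => /inj [] /eqP; rewrite oner_eq0.
  move: h12 h11 h22 l1 l2 nu nv.
  rewrite /A5_mul /v2add /v2scale /= !mulr0 !mul0r !mulr1 !addr0 !add0r.
  rewrite !mulr0 f0.
  case: (f (1,0)) => u1 u2; case: (f (0,1)) => v1 v2 /=.
  move=> [] /esym h1 /esym h2 h11 h22 l1 l2 nu nv.
  move: h11; rewrite l1 /= => -[e1 e2].
  move: h22; rewrite l2 /= => -[e3 e4].
  have [p0 q0] := @solve2 _ _ _ _ _ hab' h1 h2.
  move: p0 q0 => /eqP; rewrite mulf_eq0 => /orP [] /eqP hu1 /eqP;
    rewrite mulf_eq0 => /orP [] /eqP hx.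
  + by move: nu; rewrite hu1 hx eqxx.
  +
    subst u1 v2.
    have hu2 : u2 != 0 by apply: contra nu => /eqP ->.
    have hv1 : v1 != 0 by apply: contra nv => /eqP ->.
    move: e2 e3; rewrite !mulr0 !add0r !addr0 => e2 e3.
    have U : u2 = 1 by exact: (@idem _ _).
    have V : v1 = 1 by exact: (@idem _ _).
    subst u2 v1.
    move: e1 e4; rewrite !mulr0 !mulr1 !addr0 => e1 e4.
    by right; rewrite e4 e1 add0r.
  +
    subst v1 u2.
    have hu1 : u1 != 0 by apply: contra nu => /eqP ->.
    have hv2 : v2 != 0 by apply: contra nv => /eqP ->.
    move: e1 e4; rewrite !mulr0 !add0r !addr0 => e1 e4.
    have U : u1 = 1 by exact: (@idem _ _).
    have V : v2 = 1 by exact: (@idem _ _).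
    subst u1 v2.
    move: e2 e3; rewrite !mulr0 !mulr1 !addr0 !add0r => e2 e3.
    by left; rewrite e2 e3.
  + by move: nv; rewrite hu1 hx eqxx.
- case=> -[-> ->].
  + exists id; split => //; last by exists id.
  + exists (fun x => (x.2, x.1)); split.
    * by move=> a x y.
    * by exists (fun x => (x.2, x.1)) => -[].
    * move=> x y; rewrite /A5_mul /=; congr pair; ring.
Qed.
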